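(* Let $\Gamma$ be a connected, undirected graph without loops on $n$ nodes with Laplacian $\mathbf L=\mathbf K-\mathbf A$, and let $\phi_1,\dots,\phi_n$ be an orthonormal basis of eigenvectors of $\mathbf L$ with $\mathbf L\phi_j=\mu_j\phi_j$. Let $$\mathbf G=\begin{bmatrix}\mathbf 0&\mathbf I\\-\mathbf I&-\mathbf L\end{bmatrix},\qquad \mathbf U=\mathbf G(\mathbf G^T\mathbf G)^{-1/2},$$ $\lambda_j^{P+}=\tfrac12\big[\sqrt{\mu_j^2+4}+\mu_j\big]$ and $\theta_j=2\arctan\lambda_j^{P+}$. Then the eigenvalues of $\mathbf U$ are the $n$ pairs $$\lambda_j^{U\pm}=\cos\theta_j\pm i\sin\theta_j=e^{\pm i\theta_j},\quad j=1,\dots,n,$$ with corresponding normalized eigenvectors $$\psi_j^{U\pm}=\frac{1}{\sqrt2}\begin{bmatrix}\phi_j\\ \pm i\phi_j\end{bmatrix}.$$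
   Context: $\mathbf A$ is the adjacency matrix, $\mathbf K$ the diagonal degree matrix, $\mathbf I,\mathbf 0$ the $n\times n$ identity and zero matrices; $(\mathbf G^T\mathbf G)^{-1/2}$ is the inverse of the positive definite square root of $\mathbf G^T\mathbf G$. *)

(* Defs.v *)
From mathcomp Require Import all_boot all_order all_algebra.
From mathcomp Require Import reals trigo.
From mathcomp.real_closed Require Import complex.
Set Implicit Arguments. Unset Strict Implicit. Unset Printing Implicit Defensive.
Import GRing.Theory Num.Theory.
Local Open Scope ring_scope.

Section Defs.
Variable R : realType.

Definition adjmx n (e : rel 'I_n) : 'M[R]_n := \matrix_(i, j) (e i j)%:R.

Definition degmx n (e : rel 'I_n) : 'M[R]_n :=
  diag_mx (\row_i (\sum_j adjmx e i j)).

Definition laplacian n (e : rel 'I_n) : 'M[R]_n := degmx e - adjmx e.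

Definition Gmx n (L : 'M[R]_n) : 'M[R]_(n + n) :=
  block_mx 0 1%:M (- 1%:M) (- L).

Definition posdef m (S : 'M[R]_m) : Prop :=
  S^T = S /\ forall v : 'cV[R]_m, v != 0 -> 0 < (v^T *m S *m v) 0 0.

(* S is "the" inverse of the positive definite square root of M:
   S is positive definite and S^2 is the inverse of M *)
Definition is_inv_sqrt m (M S : 'M[R]_m) : Prop :=
  posdef S /\ S *m S *m M = 1%:M.

Definition cmx m p (M : 'M[R]_(m, p)) : 'M[R[i]]_(m, p) :=
  map_mx (fun x => Complex x 0) M.

Definition lamPplus (mu : R) : R := (Num.sqrt (mu ^+ 2 + 4) + mu) / 2.
Definition theta (mu : R) : R := 2 * atan (lamPplus mu).

Definition lamUp (mu : R) : R[i] := Complex (cos (theta mu)) (sin (theta mu)).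
Definition lamUm (mu : R) : R[i] := Complex (cos (theta mu)) (- sin (theta mu)).

Definition psiUp n (phi : 'cV[R]_n) : 'cV[R[i]]_(n + n) :=
  Complex (Num.sqrt 2)^-1 0 *: col_mx (cmx phi) (Complex 0 1 *: cmx phi).
Definition psiUm n (phi : 'cV[R]_n) : 'cV[R[i]]_(n + n) :=
  Complex (Num.sqrt 2)^-1 0 *: col_mx (cmx phi) (Complex 0 (-1) *: cmx phi).

Definition adjc m p (M : 'M[R[i]]_(m, p)) : 'M[R[i]]_(p, m) :=
  (map_mx Num.conj M)^T.

End Defs.

(* Main.v *)
Require Import Defs.
From mathcomp Require Import all_boot all_order all_algebra.
From mathcomp Require Import reals trigo.
From mathcomp.real_closed Require Import complex.
From mathcomp Require Import ring lra.
Import Order.TTheory GRing.Theory Num.Theory.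
Local Open Scope ring_scope.

Section Aux.
Variable R : realType.

Lemma lamP_pos (m : R) : 0 < lamPplus m.
Proof.
rewrite /lamPplus; apply: divr_gt0 => //.
have h : `|m| < Num.sqrt (m ^+ 2 + 4).
  rewrite -(ltr_pXn2r (n:=2)) ?nnegrE ?sqrtr_ge0 // sqr_sqrtr; last first.
    by apply: addr_ge0 => //; apply: sqr_ge0.
  by rewrite real_normK ?num_real // ltrDl.
have := ler_norm m; rewrite -normrN => hn. 
have := ler_norm (- m); rewrite normrN. lra.
Qed.

Lemma lamP_mu (m : R) : m = lamPplus m - (lamPplus m)^-1.
Proof.
have hl := lamP_pos m.
set r := Num.sqrt (m ^+ 2 + 4).
have hr : r ^+ 2 = m ^+ 2 + 4.
  by rewrite sqr_sqrtr // addr_ge0 // sqr_ge0.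
have hinv : (lamPplus m)^-1 = (r - m) / 2.
  apply: (@mulIf _ (lamPplus m)); first by rewrite gt_eqF.
  rewrite mulVf ?gt_eqF // /lamPplus -/r.
  rewrite -[RHS]/((r - m) / 2 * ((r + m) / 2)).
  apply/eqP; rewrite eq_sym -subr_eq0; apply/eqP.
  have -> : (r - m) / 2 * ((r + m) / 2) - 1 = (r ^+ 2 - m ^+ 2 - 4) / 4 by field.
  by rewrite hr; field.
by rewrite hinv /lamPplus -/r; field.
Qed.

Lemma cos_theta (m : R) : cos (theta m) = (1 - lamPplus m ^+ 2) / (1 + lamPplus m ^+ 2).
Proof.
rewrite /theta; set l := lamPplus m.
rewrite mulr_natl cos_mulr2n cos_atan.
rewrite exprVn sqr_sqrtr; last by rewrite addr_ge0 // sqr_ge0.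
have h : 1 + l ^+ 2 != 0 by rewrite gt_eqF // ltr_pwDl // sqr_ge0.
by field.
Qed.

Lemma sin_theta (m : R) : sin (theta m) = (2 * lamPplus m) / (1 + lamPplus m ^+ 2).
Proof.
rewrite /theta; set l := lamPplus m.
have [hr ht] := atan_def l.
have hc : 0 < cos (atan l) by apply: cos_gt0_pihalf.
have hs : sin (atan l) = l * cos (atan l).
  rewrite -{2}ht /tan; field; by rewrite gt_eqF.
rewrite mulr_natl sin_mulr2n hs.
have : cos (atan l) ^+ 2 = (1 + l ^+ 2)^-1.
  by rewrite cos_atan exprVn sqr_sqrtr // addr_ge0 // sqr_ge0.
have h : 1 + l ^+ 2 != 0 by rewrite gt_eqF // ltr_pwDl // sqr_ge0.
move=> e; rewrite -mulr_natr.
transitivity (2 * l * cos (atan l) ^+ 2); first by rewrite /GRing.exp /=; ring.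
by rewrite e.
Qed.

Lemma trmx_sq_ge0 m (u : 'cV[R]_m) : 0 <= (u^T *m u) 0 0.
Proof.
rewrite !mxE; apply: sumr_ge0 => i _; rewrite mxE -expr2; exact: sqr_ge0.
Qed.

Lemma posdef_eig m (S : 'M[R]_m) (v : 'cV[R]_m) (a : R) :
  posdef S -> 0 < a -> S *m (S *m v) = a ^+ 2 *: v -> S *m v = a *: v.
Proof.
move=> [_ hS] ha hv.
set u := S *m v - a *: v.
have Su : S *m u = - a *: u.
  rewrite /u mulmxBr hv -scalemxAr scalerBr scaleNr expr2 -scalerA.
  by rewrite scaleNr opprK addrC.
have [u0|nu0] := eqVneq u 0.
  by apply/eqP; rewrite -subr_eq0; apply/eqP.
have := hS u nu0; rewrite -mulmxA Su -scalemxAr mxE.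
have := trmx_sq_ge0 _ u => h1 h2.
move: h1 h2; rewrite !mxE; set s := \sum_j _ => h1 h2.
exfalso; clear hS hv Su; nra.
Qed.

Lemma lap_tr n (e : rel 'I_n) : symmetric e -> (laplacian R e)^T = laplacian R e.
Proof.
move=> es; rewrite /laplacian linearB /= /degmx tr_diag_mx; congr (_ - _).
by apply/matrixP => i j; rewrite !mxE es.
Qed.

Lemma GmxE n (L : 'M[R]_n) (a b : 'cV[R]_n) :
  Gmx L *m col_mx a b = col_mx b (- a - L *m b).
Proof.
by rewrite /Gmx mul_block_col mul0mx add0r mul1mx mulNmx mul1mx mulNmx.
Qed.

Lemma GTmxE n (L : 'M[R]_n) (a b : 'cV[R]_n) :
  (Gmx L)^T *m col_mx a b = col_mx (- b) (a - L^T *m b).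
Proof.
rewrite /Gmx tr_block_mx mul_block_col trmx0 mul0mx add0r !linearN /= trmx1.
by rewrite !mulNmx !mul1mx.
Qed.

Lemma mulmxZ m k p (A : 'M[R]_(m, k)) (a : R) (B : 'M[R]_(k, p)) :
  A *m (a *: B) = a *: (A *m B).
Proof. by rewrite scalemxAr. Qed.

Lemma S_eig k (S M : 'M[R]_k) (v : 'cV[R]_k) (a : R) : is_inv_sqrt M S -> 0 < a ->
  M *m v = a ^+ 2 *: v -> S *m v = a^-1 *: v.
Proof.
move=> [hS hSM] ha hMv; apply: posdef_eig => //; first by rewrite invr_gt0.
have : S *m S *m M *m v = v by rewrite hSM mul1mx.
rewrite -!mulmxA hMv -!scalemxAr => e.
by rewrite -{2}e scalerA -exprMn mulVf ?gt_eqF // expr1n scale1r.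
Qed.

Lemma U_pq n (L : 'M[R]_n) (S : 'M[R]_(n + n)) (x : 'cV[R]_n) (l : R) :
  L^T = L -> is_inv_sqrt ((Gmx L)^T *m Gmx L) S -> 0 < l ->
  L *m x = (l - l^-1) *: x ->
  let U := Gmx L *m S in
  let c := (1 - l ^+ 2) / (1 + l ^+ 2) in
  let s := (2 * l) / (1 + l ^+ 2) in
  U *m col_mx x 0 = c *: col_mx x 0 - s *: col_mx 0 x /\
  U *m col_mx 0 x = s *: col_mx x 0 + c *: col_mx 0 x.
Proof.
move=> LT hS hl Lx U c s.
have l0 : l != 0 by rewrite gt_eqF.
have h1l : 1 + l ^+ 2 != 0 by rewrite gt_eqF // ltr_pwDl // sqr_ge0.
have Mp : (Gmx L)^T *m Gmx L *m col_mx x (l *: x) = l ^+ 2 *: col_mx x (l *: x).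
  rewrite -mulmxA GmxE GTmxE LT !(mulmxBr, mulmxN, mulmxZ, Lx).
  rewrite scale_col_mx; congr col_mx; apply/matrixP => i k; rewrite !mxE; by field.
have Mm : (Gmx L)^T *m Gmx L *m col_mx x (- l^-1 *: x) = (l^-1) ^+ 2 *: col_mx x (- l^-1 *: x).
  rewrite -mulmxA GmxE GTmxE LT !(mulmxBr, mulmxN, mulmxZ, Lx).
  rewrite scale_col_mx; congr col_mx; apply/matrixP => i k; rewrite !mxE; by field.
have Sp := S_eig _ _ _ _ _ hS hl Mp.
have hli : 0 < l^-1 by rewrite invr_gt0.
have Sm := S_eig _ _ _ _ _ hS hli Mm; rewrite invrK in Sm.
have Up : U *m col_mx x (l *: x) = col_mx x (- (l *: x)).
  rewrite /U -mulmxA Sp mulmxZ GmxE !(mulmxN, mulmxZ, Lx) scale_col_mx.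
  congr col_mx; apply/matrixP => i k; rewrite !mxE; by field.
have Um : U *m col_mx x (- l^-1 *: x) = - col_mx x (l^-1 *: x).
  rewrite /U -mulmxA Sm mulmxZ GmxE !(mulmxN, mulmxZ, Lx) scale_col_mx opp_col_mx.
  congr col_mx; apply/matrixP => i k; rewrite !mxE; by field.
have ep : col_mx x (l *: x) = col_mx x 0 + l *: col_mx 0 x.
  by rewrite scale_col_mx add_col_mx scaler0 addr0 add0r.
have em : col_mx x (- l^-1 *: x) = col_mx x 0 - l^-1 *: col_mx 0 x.
  by rewrite scale_col_mx opp_col_mx add_col_mx scaler0 oppr0 addr0 add0r scaleNr.
rewrite ep mulmxDr mulmxZ in Up.
rewrite em mulmxBr mulmxZ in Um.
move: Up Um; set A := U *m col_mx x 0; set B := U *m col_mx 0 x.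
set P := col_mx x 0; set Q := col_mx 0 x.
have eP : col_mx x (l *: x) = P + l *: Q by [].
have eM : col_mx x (l^-1 *: x) = P + l^-1 *: Q.
  by rewrite /P /Q scale_col_mx add_col_mx scaler0 addr0 add0r.
have eN : col_mx x (- (l *: x)) = P - l *: Q.
  by rewrite /P /Q scale_col_mx opp_col_mx add_col_mx scaler0 oppr0 addr0 add0r.
rewrite eM eN => Up Um; clearbody A B P Q.
split; apply/matrixP => i k.
- have e1 := congr1 (fun M : 'cV[R]_(n + n) => M i k) Up; have e2 := congr1 (fun M : 'cV[R]_(n + n) => M i k) Um.
  move: e1 e2; rewrite !mxE => e1 e2.
  have -> : A i k = ((A i k + l * B i k) + l ^+ 2 * (A i k - l^-1 * B i k)) / (1 + l ^+ 2).
    by field; rewrite h1l l0.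
  rewrite e1 e2 /c /s; field; by rewrite h1l l0.
- have e1 := congr1 (fun M : 'cV[R]_(n + n) => M i k) Up; have e2 := congr1 (fun M : 'cV[R]_(n + n) => M i k) Um.
  move: e1 e2; rewrite !mxE => e1 e2.
  have -> : B i k = ((A i k + l * B i k) - (A i k - l^-1 * B i k)) * l / (1 + l ^+ 2).
    by field; rewrite h1l l0.
  rewrite e1 e2 /c /s; field; by rewrite h1l l0.
Qed.

Lemma cmxE m k (M : 'M[R]_(m, k)) : cmx M = map_mx (real_complex R) M.
Proof. by []. Qed.

Lemma cmx_eig n (U : 'M[R]_(n + n)) (x : 'cV[R]_n) (c s t : R) :
  U *m col_mx x 0 = c *: col_mx x 0 - (t * s) *: col_mx 0 x ->
  U *m col_mx 0 x = (t * s) *: col_mx x 0 + c *: col_mx 0 x ->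
  t ^+ 2 = 1 ->
  cmx U *m col_mx (cmx x) (Complex 0 t *: cmx x)
    = Complex c s *: col_mx (cmx x) (Complex 0 t *: cmx x).
Proof.
move=> hP hQ ht.
have -> : col_mx (cmx x) (Complex 0 t *: cmx x)
    = cmx (col_mx x 0) + Complex 0 t *: cmx (col_mx 0 x).
  rewrite !cmxE !map_col_mx !map_mx0 scale_col_mx scaler0 add_col_mx.
  by rewrite addr0 add0r.
rewrite mulmxDr -scalemxAr !cmxE -!map_mxM hP hQ -!cmxE.
move: (col_mx x 0) (col_mx 0 x) => P Q.
apply/matrixP => i k; rewrite !mxE.
move: (P i k) (Q i k) => a b.
simpc; apply/eqP; rewrite eq_complex /=; apply/andP; split; apply/eqP.
- ring.
- transitivity (t ^+ 2 * s * a + c * (t * b)); first ring.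
  by rewrite ht; ring.
Qed.

Lemma conjCE (a b : R) : Num.conj (Complex a b) = Complex a (- b).
Proof.
have rr : forall y : R, (Complex y 0) \is Num.real.
  by move=> y; rewrite realE !lecE /= eqxx /= -realE num_real.
have -> : Complex a b = Complex a 0 + 'i * Complex b 0.
  by rewrite -complexiE; simpc.
by rewrite conjC_rect // -complexiE; simpc.
Qed.

Lemma psi_norm n (x : 'cV[R]_n) (t : R) : t ^+ 2 = 1 -> \sum_j x j 0 ^+ 2 = 1 ->
  let psi := Complex (Num.sqrt 2)^-1 0 *: col_mx (cmx x) (Complex 0 t *: cmx x) in
  adjc psi *m psi = 1%:M.
Proof.
move=> ht hx psi.
set h := (Num.sqrt 2 : R)^-1.
have h2 : h ^+ 2 = 2^-1.
  by rewrite /h exprVn sqr_sqrtr.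
have pl j : psi (lshift n j) 0 = Complex h 0 * Complex (x j 0) 0.
  by rewrite /psi mxE col_mxEu mxE.
have pr j : psi (rshift n j) 0 = Complex h 0 * (Complex 0 t * Complex (x j 0) 0).
  by rewrite /psi mxE col_mxEd mxE mxE.
apply/matrixP => i k; rewrite !ord1 [LHS]mxE [RHS]mxE big_split_ord /=.
have e1 : forall j : 'I_n, (map_mx Num.conj psi)^T 0 (lshift n j) * psi (lshift n j) 0
    = real_complex R (h ^+ 2 * x j 0 ^+ 2).
  move=> j; rewrite mxE mxE pl conjCE; simpc.
  apply/eqP; rewrite eq_complex /=; apply/andP; split; apply/eqP; ring.
have e2 : forall j : 'I_n, (map_mx Num.conj psi)^T 0 (rshift n j) * psi (rshift n j) 0
    = real_complex R (h ^+ 2 * x j 0 ^+ 2).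
  move=> j; rewrite mxE mxE pr conjCE; simpc.
  apply/eqP; rewrite eq_complex /=; apply/andP; split; apply/eqP.
    by transitivity (h ^+ 2 * x j 0 ^+ 2 * t ^+ 2); [ring | rewrite ht; ring].
  ring.
rewrite (eq_bigr _ (fun j _ => e1 j)) (eq_bigr _ (fun j _ => e2 j)).
rewrite -!rmorph_sum -rmorphD /= -!mulr_sumr hx h2 mulr1.
have -> : (2^-1 + 2^-1 : R) = 1 by field.
by rewrite rmorph1.
Qed.
End Aux.

Lemma similar_char (F : fieldType) k (A D Q Qi : 'M[F]_k) :
  Qi *m Q = 1%:M -> A *m Q = Q *m D -> char_poly A = char_poly D.
Proof.
move=> hQ hAD.
have hQ' : Q *m Qi = 1%:M by apply: mulmx1C.
have eA : A = Q *m D *m Qi by rewrite -hAD -mulmxA hQ' mulmx1.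
rewrite /char_poly eA.
have e : char_poly_mx (Q *m D *m Qi) = map_mx polyC Q *m char_poly_mx D *m map_mx polyC Qi.
  rewrite /char_poly_mx mulmxBr mulmxBl !map_mxM; congr (_ - _).
  by rewrite mul_mx_scalar -scalemxAl -map_mxM hQ' map_mx1 scalemx1.
rewrite e !det_mulmx mulrC mulrA -det_mulmx -map_mxM hQ map_mx1 det1 mul1r.
by [].
Qed.

Lemma eig_all (R : realType) n (L : 'M[R]_n) (S : 'M[R]_(n + n)) (x : 'cV[R]_n) (m : R) :
  L^T = L -> is_inv_sqrt ((Gmx L)^T *m Gmx L) S -> L *m x = m *: x ->
  cmx (Gmx L *m S) *m col_mx (cmx x) (Complex 0 1 *: cmx x)
    = lamUp m *: col_mx (cmx x) (Complex 0 1 *: cmx x) /\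
  cmx (Gmx L *m S) *m col_mx (cmx x) (Complex 0 (-1) *: cmx x)
    = lamUm m *: col_mx (cmx x) (Complex 0 (-1) *: cmx x).
Proof.
move=> LT hS Lx.
have hl := @lamP_pos R m.
have hm := @lamP_mu R m.
set l := lamPplus m in hl hm.
rewrite hm in Lx.
have [hP hQ] := U_pq _ _ _ _ _ _ LT hS hl Lx.
split.
- apply: cmx_eig.
  + by rewrite hP mul1r cos_theta sin_theta.
  + by rewrite hQ mul1r cos_theta sin_theta.
  + by rewrite expr1n.
- apply: cmx_eig.
  + by rewrite hP mulN1r opprK cos_theta sin_theta.
  + by rewrite hQ mulN1r opprK cos_theta sin_theta.
  + by rewrite sqrrN expr1n.
Qed.

Theorem proposition7 (R : realType) (n : nat) (e : rel 'I_n)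
  (e_sym : symmetric e) (e_irr : irreflexive e)
  (e_conn : forall i j : 'I_n, connect e i j)
  (phi : 'M[R]_n) (mu : 'I_n -> R)
  (phi_on : phi^T *m phi = 1%:M)
  (phi_eig : forall j : 'I_n,
      laplacian R e *m col j phi = mu j *: col j phi)
  (S : 'M[R]_(n + n))
  (hS : is_inv_sqrt ((Gmx (laplacian R e))^T *m Gmx (laplacian R e)) S) :
  let U := Gmx (laplacian R e) *m S in
  char_poly (cmx U)
    = \prod_(j < n) (('X - (lamUp (mu j))%:P) * ('X - (lamUm (mu j))%:P))
  /\ (forall j : 'I_n,
        cmx U *m psiUp (col j phi) = lamUp (mu j) *: psiUp (col j phi)
     /\ cmx U *m psiUm (col j phi) = lamUm (mu j) *: psiUm (col j phi)
     /\ adjc (psiUp (col j phi)) *m psiUp (col j phi) = 1%:M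
     /\ adjc (psiUm (col j phi)) *m psiUm (col j phi) = 1%:M).
Proof.
move=> U.
have LT := lap_tr R n e e_sym.
have EIG j := eig_all _ _ _ _ _ (mu j) LT hS (phi_eig j).
have NRM j : \sum_i col j phi i 0 ^+ 2 = 1.
  have := congr1 (fun M : 'M[R]_n => M j j) phi_on; rewrite !mxE eqxx /= => h; apply: (etrans _ h).
  by apply: eq_bigr => i _; rewrite !mxE expr2.
split; last first.
  move=> j; have [E1 E2] := EIG j.
  split; [|split; [|split]].
  - by rewrite /psiUp -scalemxAr -/U E1 scalerA mulrC -scalerA.
  - by rewrite /psiUm -scalemxAr -/U E2 scalerA mulrC -scalerA.
  - by apply: psi_norm => //; rewrite expr1n.
  - by apply: psi_norm => //; rewrite sqrrN expr1n.
set Phi := cmx phi.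
have hPhi : Phi^T *m Phi = 1%:M.
  by rewrite /Phi !cmxE map_trmx -map_mxM phi_on map_mx1.
have hrow (a b : R[i]) : row_mx Phi^T (a *: Phi^T) *m col_mx Phi (b *: Phi) = (1 + a * b)%:M.
  rewrite mul_row_col -scalemxAl -scalemxAr scalerA hPhi scalemx1.
  by apply/matrixP => i j; rewrite !mxE mulrnDl.
set Ql := col_mx Phi (Complex 0 1 *: Phi).
set Qr := col_mx Phi (Complex 0 (-1) *: Phi).
set Q := row_mx Ql Qr.
set Qi := ((2 : R[i])^-1) *: col_mx (row_mx Phi^T (Complex 0 (-1) *: Phi^T))
                                     (row_mx Phi^T (Complex 0 1 *: Phi^T)).
set dp := \row_j lamUp (mu j).
set dm := \row_j lamUm (mu j).
set D := block_mx (diag_mx dp) 0 0 (diag_mx dm).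
have hQ : Qi *m Q = 1%:M.
  rewrite /Qi /Q -scalemxAl mul_col_row !hrow.
  have c1 : 1 + Complex 0 (-1) * Complex 0 1 = 1 + 1 :> R[i].
    by simpc; apply/eqP; rewrite eq_complex /=; apply/andP; split; apply/eqP; ring.
  have c2 : 1 + Complex 0 (-1) * Complex 0 (-1) = 0 :> R[i].
    by simpc; apply/eqP; rewrite eq_complex /=; apply/andP; split; apply/eqP; ring.
  have c3 : 1 + Complex 0 1 * Complex 0 1 = 0 :> R[i].
    by simpc; apply/eqP; rewrite eq_complex /=; apply/andP; split; apply/eqP; ring.
  have c4 : 1 + Complex 0 1 * Complex 0 (-1) = 1 + 1 :> R[i].
    by simpc; apply/eqP; rewrite eq_complex /=; apply/andP; split; apply/eqP; ring.
  rewrite c1 c2 c3 c4 scale_block_mx !scale_scalar_mx !mulr0.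
  have -> : (2 : R[i])^-1 * (1 + 1) = 1 by rewrite mulVf // pnatr_eq0.
  by rewrite (scalar_mx_block n n 1) -[0%:M]/(0 : R[i])%:M raddf0 /=.

have hAQ : cmx U *m Q = Q *m D.
  rewrite /Q /D mul_mx_row mul_row_block !mulmx0 addr0 add0r.
  have colQ (t : R) (j : 'I_n) : col j (col_mx Phi (Complex 0 t *: Phi))
      = col_mx (cmx (col j phi)) (Complex 0 t *: cmx (col j phi)).
    by apply/matrixP => a b; rewrite !mxE; case: (split a) => c; rewrite /Phi !mxE.
  have key (t : R) (d : 'rV[R[i]]_n) :
      (forall j, cmx U *m col_mx (cmx (col j phi)) (Complex 0 t *: cmx (col j phi))
         = d 0 j *: col_mx (cmx (col j phi)) (Complex 0 t *: cmx (col j phi))) ->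
      cmx U *m col_mx Phi (Complex 0 t *: Phi) = col_mx Phi (Complex 0 t *: Phi) *m diag_mx d.
    move=> hd; rewrite mul_mx_diag; apply/matrixP => a b.
    have := congr1 (fun M : 'cV[R[i]]_(n + n) => M a 0) (hd b).
    rewrite -colQ mxE [in RHS]mxE => h.
    rewrite [col b _ a 0]mxE in h.
    rewrite [RHS]mulrC -h.
    rewrite !mxE; apply: eq_bigr => k _; rewrite !mxE //.
  congr row_mx; apply: key => j; rewrite mxE.
  - exact: (EIG j).1.
  - exact: (EIG j).2.
rewrite (similar_char _ _ _ _ _ _ hQ hAQ) /D -diag_mx_row char_poly_trig ?diag_mx_is_trig //.
rewrite big_split_ord [RHS]big_split /=; congr (_ * _); apply: eq_bigr => j _.
- by rewrite [diag_mx _ _ _]mxE eqxx mulr1n row_mxEl mxE.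
- by rewrite [diag_mx _ _ _]mxE eqxx mulr1n row_mxEr mxE.
Qed.
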